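(* Let $K$ be a positive semidefinite kernel, let $(\mathbf{x}_i,y_i)$, $i=1,\dots,N$ with $N=n+mL$, be the augmented MU-SVM data set with costs $C_i>0$ and margins $e_{il}$ (defined in the context), and let $\boldsymbol\alpha=(\alpha_{il})$ be an optimal solution of the dual problem $$\max_{\boldsymbol\alpha}\ -\tfrac12\sum_{i,j}\sum_l\alpha_{il}\alpha_{jl}K(\mathbf{x}_i,\mathbf{x}_j)-\sum_{i,l}\alpha_{il}e_{il}\quad\text{s.t.}\quad\sum_l\alpha_{il}=0\ \forall i;\ \ \alpha_{il}\le C_i\text{ if }l=y_i;\ \ \alpha_{il}\le0\text{ if }l\ne y_i.$$ Let $SV_1=\{i: 0<\alpha_{iy_i}<C_i\}$. Then for every $i\in SV_1$: (i) $\sum_{k=1}^L\alpha_{ik}\big[\sum_j\alpha_{jk}K(\mathbf{x}_i,\mathbf{x}_j)+e_{ik}\big]=0$; (ii) for every $k\ne y_i$ with $\alpha_{ik}<0$ (strictly), $\sum_j\alpha_{jk}K(\mathbf{x}_i,\mathbf{x}_j)+e_{ik}=\sum_j\alpha_{jy_i}K(\mathbf{x}_i,\mathbf{x}_j)+e_{iy_i}$; (iii) for every $\boldsymbol\gamma_i=(\gamma_{i1},\dots,\gamma_{iL})$ with $\sum_k\gamma_{ik}=0$ and $\gamma_{ik}=0$ whenever $\alpha_{ik}=0$, one has $\sum_k\gamma_{ik}\big[\sum_j\alpha_{jk}K(\mathbf{x}_i,\mathbf{x}_j)+e_{ik}\big]=0$.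
   Context: Training samples $(\mathbf{x}_i,y_i)$, $i=1,\dots,n$, $y_i\in\{1,\dots,L\}$, have $C_i=C$ and $e_{il}=1-\delta_{il}$. Each universum sample $\mathbf{x}^*_{i'}$, $i'=1,\dots,m$, is replicated $L$ times: for $k=1,\dots,L$ the index $i=n+(i'-1)L+k$ carries $(\mathbf{x}_i,y_i)=(\mathbf{x}^*_{i'},k)$, $C_i=C^*$ and $e_{il}=-\Delta(1-\delta_{il})$, with $\Delta\ge0$. Here $\delta_{il}=1$ if $y_i=l$, else $0$. This dual is the dual of the primal $\min\frac12\sum_l\|\mathbf{w}_l\|^2+\sum_iC_i\xi_i$ s.t. $(\mathbf{w}_{y_i}-\mathbf{w}_l)^\top\phi(\mathbf{x}_i)\ge e_{il}-\xi_i$, with $\mathbf{w}_l=\sum_i\alpha_{il}\phi(\mathbf{x}_i)$, where $\phi$ is the feature map of $K$. *)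

(* Defs.v *)
From mathcomp Require Import all_boot all_order all_algebra.
Set Implicit Arguments. Unset Strict Implicit. Unset Printing Implicit Defensive.
Import Order.TTheory GRing.Theory Num.Theory.
Local Open Scope ring_scope.

Definition psd_kernel (R : realFieldType) (X : Type) (K : X -> X -> R) : Prop :=
  (forall x y, K x y = K y x) /\
  (forall (p : nat) (x : 'I_p -> X) (c : 'I_p -> R),
      0 <= \sum_(i < p) \sum_(j < p) c i * c j * K (x i) (x j)).

(* Index set of the augmented data set: n training samples, and m universum
   samples each replicated L times (one copy per class k).  Its cardinality
   is n + m*L. *)
Definition aug_idx (n m L : nat) : finType := ('I_n + 'I_m * 'I_L)%type.

Definition aug_x (X : Type) (n m L : nat) (xtr : 'I_n -> X) (xu : 'I_m -> X)
  (i : aug_idx n m L) : X :=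
  match i with inl j => xtr j | inr (i', _) => xu i' end.

Definition aug_y (n m L : nat) (ytr : 'I_n -> 'I_L) (i : aug_idx n m L) : 'I_L :=
  match i with inl j => ytr j | inr (_, k) => k end.

Definition aug_C (R : realFieldType) (n m L : nat) (C Cs : R)
  (i : aug_idx n m L) : R :=
  match i with inl _ => C | inr _ => Cs end.

Definition aug_e (R : realFieldType) (n m L : nat) (ytr : 'I_n -> 'I_L) (Delta : R)
  (i : aug_idx n m L) (l : 'I_L) : R :=
  match i with
  | inl j => 1 - (ytr j == l)%:R
  | inr (_, k) => - Delta * (1 - (k == l)%:R)
  end.

Definition dual_obj (R : realFieldType) (X : Type) (I : finType) (L : nat)
  (K : X -> X -> R) (x : I -> X) (e : I -> 'I_L -> R) (a : I -> 'I_L -> R) : R :=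
  - (1/2) * (\sum_i \sum_j \sum_(l < L) a i l * a j l * K (x i) (x j))
  - \sum_i \sum_(l < L) a i l * e i l.

Definition dual_feasible (R : realFieldType) (I : finType) (L : nat)
  (y : I -> 'I_L) (C : I -> R) (a : I -> 'I_L -> R) : Prop :=
  forall i, \sum_(l < L) a i l = 0 /\ a i (y i) <= C i /\
            (forall l, l != y i -> a i l <= 0).

Definition dual_optimal (R : realFieldType) (X : Type) (I : finType) (L : nat)
  (K : X -> X -> R) (x : I -> X) (y : I -> 'I_L) (C : I -> R)
  (e : I -> 'I_L -> R) (a : I -> 'I_L -> R) : Prop :=
  dual_feasible y C a /\
  forall b, dual_feasible y C b -> dual_obj K x e b <= dual_obj K x e a.

Definition grad_term (R : realFieldType) (X : Type) (I : finType) (L : nat)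
  (K : X -> X -> R) (x : I -> X) (e : I -> 'I_L -> R) (a : I -> 'I_L -> R)
  (i : I) (k : 'I_L) : R :=
  \sum_j a j k * K (x i) (x j) + e i k.

(* Main.v *)
Require Import Defs.
From mathcomp Require Import all_boot all_order all_algebra.
From mathcomp Require Import lra ring.
Import Order.TTheory GRing.Theory Num.Theory.
Local Open Scope ring_scope.

Lemma sum_delta (R : realFieldType) (I : finType) (i0 : I) (F : I -> R) :
  \sum_j (j == i0)%:R * F j = F i0.
Proof.
rewrite (bigD1 i0) //= eqxx mul1r big1 ?addr0 // => j /negbTE ->.
by rewrite mul0r.
Qed.

Lemma obj_perturb (R : realFieldType) (X : Type) (I : finType) (L : nat)
  (K : X -> X -> R) (x : I -> X) (e : I -> 'I_L -> R) (a : I -> 'I_L -> R)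
  (i0 : I) (g : 'I_L -> R) (t : R) :
  (forall u v, K u v = K v u) ->
  dual_obj K x e (fun j l => a j l + t * ((j == i0)%:R * g l)) =
  dual_obj K x e a - t * (\sum_(l < L) g l * grad_term K x e a i0 l)
  - t ^+ 2 / 2 * (\sum_(l < L) g l ^+ 2 * K (x i0) (x i0)).
Proof.
move=> Ks; rewrite /dual_obj /grad_term.
set d := fun j : I => ((j == i0)%:R : R).
have E1 : \sum_i \sum_(l < L) (a i l + t * (d i * g l)) * e i l =
   \sum_i \sum_(l < L) a i l * e i l + t * \sum_(l < L) g l * e i0 l.
  have -> : t * \sum_(l < L) g l * e i0 l =
      \sum_i d i * (\sum_(l < L) t * g l * e i l).
    by rewrite sum_delta mulr_sumr; apply: eq_bigr => l _; ring.
  rewrite -big_split; apply: eq_bigr => i _; rewrite mulr_sumr -big_split.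
  by apply: eq_bigr => l _ /=; ring.
have E2 : \sum_i \sum_j \sum_(l < L)
     (a i l + t * (d i * g l)) * (a j l + t * (d j * g l)) * K (x i) (x j) =
   \sum_i \sum_j \sum_(l < L) a i l * a j l * K (x i) (x j)
   + \sum_i \sum_j d j * \sum_(l < L) t * a i l * g l * K (x i) (x j)
   + \sum_i d i * \sum_j \sum_(l < L) t * g l * a j l * K (x i) (x j)
   + \sum_i d i * \sum_j d j * \sum_(l < L) t ^+ 2 * g l ^+ 2 * K (x i) (x j).
  rewrite -!big_split; apply: eq_bigr => i _ /=.
  rewrite !mulr_sumr -!big_split; apply: eq_bigr => j _ /=.
  rewrite !mulr_sumr -!big_split; apply: eq_bigr => l _ /=.
  ring.
rewrite E1 E2.
have -> : \sum_i \sum_j d j * \sum_(l < L) t * a i l * g l * K (x i) (x j)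
  = \sum_i \sum_(l < L) t * a i l * g l * K (x i) (x i0).
  by apply: eq_bigr => i _; rewrite sum_delta.
rewrite sum_delta.
have -> : \sum_i d i * \sum_j d j * \sum_(l < L) t ^+ 2 * g l ^+ 2 * K (x i) (x j)
  = \sum_(l < L) t ^+ 2 * g l ^+ 2 * K (x i0) (x i0).
  by rewrite sum_delta sum_delta.
have -> : \sum_i \sum_(l < L) t * a i l * g l * K (x i) (x i0) =
   t * \sum_(l < L) g l * \sum_j a j l * K (x i0) (x j).
  rewrite exchange_big mulr_sumr; apply: eq_bigr => l _.
  rewrite !mulr_sumr; apply: eq_bigr => j _; rewrite Ks; ring.
have -> : \sum_j \sum_(l < L) t * g l * a j l * K (x i0) (x j) =
   t * \sum_(l < L) g l * \sum_j a j l * K (x i0) (x j).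
  rewrite exchange_big mulr_sumr; apply: eq_bigr => l _.
  rewrite !mulr_sumr; apply: eq_bigr => j _; ring.
have -> : \sum_(l < L) g l * (\sum_j a j l * K (x i0) (x j) + e i0 l) =
   \sum_(l < L) g l * \sum_j a j l * K (x i0) (x j) + \sum_(l < L) g l * e i0 l.
  by rewrite -big_split; apply: eq_bigr => l _ /=; ring.
have -> : \sum_(l < L) t ^+ 2 * g l ^+ 2 * K (x i0) (x i0) =
   t ^+ 2 * \sum_(l < L) g l ^+ 2 * K (x i0) (x i0).
  by rewrite mulr_sumr; apply: eq_bigr => l _; ring.
field; lra.
Qed.

Lemma pos_lb (R : realFieldType) (T : finType) (P : pred T) (r : T -> R) :
  (forall l, P l -> 0 < r l) -> exists d, 0 < d /\ forall l, P l -> d <= r l.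
Proof.
move=> Hr.
suff [d [d0 Hd]] : exists d, 0 < d /\ forall l, l \in enum T -> P l -> d <= r l.
  by exists d; split => // l; apply: Hd; rewrite mem_enum.
elim: (enum T) => [|z s [d [d0 Hd]]]; first by exists 1; split => //.
case Pz: (P z).
  exists (Num.min d (r z)); split; first by rewrite lt_min d0 Hr.
  move=> l; rewrite in_cons => /orP[/eqP -> _|ls Pl]; rewrite ge_min.
    by rewrite lexx orbT.
  by rewrite Hd.
exists d; split => // l; rewrite in_cons => /orP[/eqP -> |]; first by rewrite Pz.
exact: Hd.
Qed.

Lemma le_sum_abs (R : realFieldType) (L : nat) (g : 'I_L -> R) l :
  `|g l| <= \sum_(k < L) `|g k|.
Proof.
rewrite (bigD1 l) //=; apply: ler_wpDr => //; exact: sumr_ge0.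
Qed.

Lemma key_iii (R : realFieldType) (X : Type) (I : finType) (L : nat)
  (K : X -> X -> R) (x : I -> X) (y : I -> 'I_L) (C : I -> R)
  (e : I -> 'I_L -> R) (a : I -> 'I_L -> R) (i : I) :
  psd_kernel K -> dual_optimal K x y C e a -> a i (y i) < C i ->
  forall gamma : 'I_L -> R, \sum_(k < L) gamma k = 0 ->
           (forall k, a i k = 0 -> gamma k = 0) ->
           \sum_(k < L) gamma k * grad_term K x e a i k = 0.
Proof.
move=> [Ks Kpsd] [feas opt] aiC g sg zg.
set G := \sum_(k < L) g k * _.
have Kii : 0 <= K (x i) (x i).
  by have := Kpsd 1%N (fun _ => x i) (fun _ => 1); rewrite !big_ord1 !mul1r.
set c := \sum_(l < L) g l ^+ 2 * K (x i) (x i).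
have c0 : 0 <= c by apply: sumr_ge0 => l _; apply: mulr_ge0 => //; exact: sqr_ge0.
pose r l := if l == y i then C i - a i (y i) else - a i l.
have [d [d0 Hd]] : exists d, 0 < d /\ forall l, g l != 0 -> d <= r l.
  apply: (@pos_lb R _ (fun l => g l != 0)) => l gl; rewrite /r.
  case: eqP => [_|/eqP ly]; first by rewrite subr_gt0.
  have := (feas i).2.2 l ly; rewrite le_eqVlt => /orP[/eqP al|]; last by rewrite oppr_gt0.
  by move: gl; rewrite zg ?eqxx.
case: (eqVneq G 0) => // GN.
exfalso.
set S := \sum_(k < L) `|g k|.
have S0 : 0 <= S by apply: sumr_ge0.
set d' := Num.min d 1.
have d'0 : 0 < d' by rewrite lt_min d0 ltr01.
have d'd : d' <= d by rewrite ge_min lexx.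
have d'1 : d' <= 1 by rewrite ge_min lexx orbT.
set D := 1 + `|G| * S + c.
have D0 : 0 < D by have := normr_ge0 G; rewrite /D; nra.
set u := d' / D.
have u0 : 0 < u by rewrite /u divr_gt0.
have uD : u * D = d' by rewrite /u mulfVK // gt_eqF.
set t := - G * u.
have tg : forall l, `|t * g l| <= d'.
  move=> l; rewrite normrM /t normrM normrN -uD.
  have := @le_sum_abs _ _ g l; rewrite -/S => gS.
  have h1 : `|G| * `|g l| <= D.
    have gS' : 0 <= S - `|g l| by rewrite subr_ge0.
    have := mulr_ge0 (normr_ge0 G) gS'; rewrite /D; nra.
  rewrite (ger0_norm (ltW u0)); nra.
pose b := fun j l => a j l + t * ((j == i)%:R * g l).
have fb : dual_feasible y C b.
  move=> j; have [s1 [s2 s3]] := feas j; rewrite /b; split; [|split].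
  - rewrite big_split /= s1 -mulr_sumr -mulr_sumr sg; lra.
  - case: (eqVneq j i) => [ji|ji]; last by rewrite mul0r mulr0 addr0.
    subst j.
    rewrite mul1r.
    case: (eqVneq (g (y i)) 0) => [->|gy]; first by rewrite mulr0 addr0.
    have := Hd _ gy; rewrite /r eqxx => h1.
    have := tg (y i); rewrite ler_norml => /andP[_ h2]; lra.
  - move=> l ly; case: (eqVneq j i) => [ji|ji]; last by rewrite mul0r mulr0 addr0; exact: s3.
    subst j; rewrite mul1r.
    case: (eqVneq (g l) 0) => [->|gy]; first by rewrite mulr0 addr0; exact: s3.
    have := Hd _ gy; rewrite /r (negbTE ly) => h1.
    have := tg l; rewrite ler_norml => /andP[_ h2]; lra.
have := opt _ fb; rewrite /b obj_perturb // -/G -/c /t.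
have G2 : 0 < G ^+ 2 by rewrite lt_def sqrf_eq0 GN sqr_ge0.
have uc : u * c <= d'.
  rewrite -uD; apply: ler_wpM2l; first exact: ltW.
  have := normr_ge0 G; rewrite /D; nra.
have key : 0 < u * G ^+ 2 * (1 - u * c / 2).
  by apply: mulr_gt0; [exact: mulr_gt0|lra].
move=> H; nra.
Qed.

Lemma sum_ind (R : realFieldType) (L : nat) (k : 'I_L) :
  \sum_(l < L) ((l == k)%:R : R) = 1.
Proof. by rewrite (bigD1 k) //= eqxx big1 ?addr0 // => l /negbTE ->. Qed.

Theorem lemmaA1 (R : realFieldType) (X : Type) (K : X -> X -> R)
  (n m L : nat) (xtr : 'I_n -> X) (ytr : 'I_n -> 'I_L) (xu : 'I_m -> X)
  (C Cs Delta : R) (a : aug_idx n m L -> 'I_L -> R) :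
  psd_kernel K -> 0 < C -> 0 < Cs -> 0 <= Delta ->
  dual_optimal K (aug_x xtr xu) (aug_y ytr) (aug_C C Cs) (aug_e ytr Delta) a ->
  forall i : aug_idx n m L,
    0 < a i (aug_y ytr i) < aug_C C Cs i ->
    let g := grad_term K (aug_x xtr xu) (aug_e ytr Delta) a i in
    [/\ \sum_(k < L) a i k * g k = 0,
        (forall k : 'I_L, k != aug_y ytr i -> a i k < 0 -> g k = g (aug_y ytr i))
      & (forall gamma : 'I_L -> R, \sum_(k < L) gamma k = 0 ->
           (forall k, a i k = 0 -> gamma k = 0) ->
           \sum_(k < L) gamma k * g k = 0)].
Proof.
move=> Kp C0 Cs0 D0 opt i /andP[ai0 aiC] g.
have iii := @key_iii _ _ _ _ _ _ _ _ _ _ i Kp opt aiC.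
split.
- by apply: iii; [exact: (opt.1 i).1 | move=> k ->].
- move=> k ky ak.
  pose gam := fun l : 'I_L => (l == k)%:R - (l == aug_y ytr i)%:R : R.
  have := iii gam.
  have -> : \sum_(l < L) gam l * grad_term K (aug_x xtr xu) (aug_e ytr Delta) a i l
      = g k - g (aug_y ytr i).
    rewrite /gam; under eq_bigr do rewrite mulrBl.
    by rewrite sumrB !sum_delta.
  move=> h; apply/eqP; rewrite -subr_eq0; apply/eqP; apply: h.
    by rewrite /gam sumrB !sum_ind subrr.
  move=> l al; rewrite /gam.
  have lk : (l == k) = false by apply/eqP => lk; move: ak; rewrite -lk al ltxx.
  have ly : (l == aug_y ytr i) = false.
    by apply/eqP => ly; move: ai0; rewrite -ly al ltxx.
  by rewrite lk ly subrr.
- exact: iii.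
Qed.
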